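(* In the continuous Donation Game, let $\gamma\in\mathbb{R}$. Suppose there exist a bounded measurable $\psi:[0,K]\to\mathbb{R}$, a probability measure $\sigma_X^0$ on $[0,K]$ and a Markov kernel $\sigma_X[x,y]$ from $[0,K]^2$ to $[0,K]$ such that for all $x,y\in[0,K]$, $$u_Y(x,y)-\gamma=\psi(x)-\lambda\int\psi(s)\,d\sigma_X[x,y](s)-(1-\lambda)\int\psi(s)\,d\sigma_X^0(s).$$ Then $0\le\gamma\le b(K)-c(K)$.
   Context: Continuous Donation Game: fix $K>0$ and measurable nondecreasing functions $b,c:[0,K]\to\mathbb{R}$ with $b(0)=c(0)=0$ and $b(s)>c(s)$ for $s>0$. Action spaces $S_X=S_Y=[0,K]$, payoffs $u_X(x,y)=b(y)-c(x)$, $u_Y(x,y)=b(x)-c(y)$, discount factor $\lambda\in(0,1)$. *)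

(* Defs.v *)
From Stdlib Require Import Reals Lra List Classical ClassicalEpsilon.
Open Scope R_scope.

Definition sigma_algebra {T : Type} (S : (T -> Prop) -> Prop) : Prop :=
  S (fun _ => True) /\
  (forall A, S A -> S (fun x => ~ A x)) /\
  (forall F : nat -> T -> Prop, (forall n, S (F n)) -> S (fun x => exists n, F n x)).

Definition generated {T : Type} (G : (T -> Prop) -> Prop) (A : T -> Prop) : Prop :=
  forall S, sigma_algebra S -> (forall B, G B -> S B) -> S A.

Definition borelR : (R -> Prop) -> Prop :=
  generated (fun B => exists a b, forall x, B x <-> a < x < b).

Definition borelR2 : (R * R -> Prop) -> Prop :=
  generated (fun B => exists a b c d,
     forall p, B p <-> (a < fst p < b /\ c < snd p < d)).

Definition inI (K x : R) : Prop := 0 <= x <= K.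

Definition measurable_on (K : R) (f : R -> R) : Prop :=
  forall a : R, borelR (fun x => inI K x /\ f x <= a).

Definition measurable2_on (K : R) (g : R -> R -> R) : Prop :=
  forall a : R, borelR2 (fun p => inI K (fst p) /\ inI K (snd p) /\ g (fst p) (snd p) <= a).

Definition bounded_on (K : R) (f : R -> R) : Prop :=
  exists M, forall x, inI K x -> Rabs (f x) <= M.

(** * Probability measures on [0,K]
   Represented as a Borel probability measure on R concentrated on [0,K]
   (values on non-Borel sets are irrelevant). *)
Definition pairwise_disjoint {T : Type} (F : nat -> T -> Prop) : Prop :=
  forall n m, n <> m -> forall x, F n x -> F m x -> False.

Definition is_prob_measure (K : R) (mu : (R -> Prop) -> R) : Prop :=
  (forall A, borelR A -> 0 <= mu A) /\
  (forall F : nat -> R -> Prop, (forall n, borelR (F n)) -> pairwise_disjoint F ->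
      infinite_sum (fun n => mu (F n)) (mu (fun x => exists n, F n x))) /\
  mu (fun _ => True) = 1 /\
  mu (fun x => inI K x) = 1.

Definition is_markov_kernel (K : R) (sigma : R -> R -> (R -> Prop) -> R) : Prop :=
  (forall x y, inI K x -> inI K y -> is_prob_measure K (sigma x y)) /\
  (forall A, borelR A -> measurable2_on K (fun x y => sigma x y A)).

Definition indic (A : R -> Prop) (x : R) : R :=
  if excluded_middle_informative (A x) then 1 else 0.

Definition simple_eval (s : list (R * (R -> Prop))) (x : R) : R :=
  fold_right (fun p acc => fst p * indic (snd p) x + acc) 0 s.

Definition simple_int (mu : (R -> Prop) -> R) (s : list (R * (R -> Prop))) : R :=
  fold_right (fun p acc => fst p * mu (snd p) + acc) 0 s.

Definition lower_sums (K : R) (mu : (R -> Prop) -> R) (f : R -> R) (r : R) : Prop :=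
  exists s, Forall (fun p => borelR (snd p)) s /\
            (forall x, inI K x -> simple_eval s x <= f x) /\
            r = simple_int mu s.

Definition is_integral (K : R) (mu : (R -> Prop) -> R) (f : R -> R) (I : R) : Prop :=
  is_lub (lower_sums K mu f) I.

Definition uX (b c : R -> R) (x y : R) : R := b y - c x.
Definition uY (b c : R -> R) (x y : R) : R := b x - c y.

Definition donation_game (K : R) (b c : R -> R) : Prop :=
  0 < K /\
  measurable_on K b /\ measurable_on K c /\
  (forall s t, 0 <= s -> s <= t -> t <= K -> b s <= b t) /\
  (forall s t, 0 <= s -> s <= t -> t <= K -> c s <= c t) /\
  b 0 = 0 /\ c 0 = 0 /\
  (forall s, 0 < s <= K -> c s < b s).

(* Main.v *)
Require Import Defs.
From Stdlib Require Import Reals.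
From Stdlib Require Import List Lra Lia Classical ClassicalEpsilon FunctionalExtensionality PropExtensionality.
Open Scope R_scope.

Lemma pred_ext (A B : R -> Prop) : (forall x, A x <-> B x) -> A = B.
Proof. intro H; extensionality x; apply propositional_extensionality; auto. Qed.

Lemma borel_ext A B : borelR A -> (forall x, A x <-> B x) -> borelR B.
Proof. intros HA H; rewrite <- (pred_ext A B H); exact HA. Qed.

Lemma borel_sigma : sigma_algebra borelR.
Proof.
  split; [|split].
  - intros S HS HG; apply HS.
  - intros A HA S HS HG; apply HS, HA; auto.
  - intros F HF S HS HG; apply HS; intro n; apply HF; auto.
Qed.

Lemma borel_True : borelR (fun _ => True).
Proof. apply borel_sigma. Qed.

Lemma borel_compl A : borelR A -> borelR (fun x => ~ A x).
Proof. apply borel_sigma. Qed.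

Lemma borel_False : borelR (fun _ => False).
Proof. apply (borel_ext _ _ (borel_compl _ borel_True)); tauto. Qed.

Lemma borel_union A B : borelR A -> borelR B -> borelR (fun x => A x \/ B x).
Proof.
  intros HA HB.
  set (F := fun n : nat => match n with O => A | _ => B end).
  assert (H : borelR (fun x => exists n, F n x)).
  { apply borel_sigma. intros [|n]; simpl; auto. }
  apply (borel_ext _ _ H). intro x; split.
  - intros [[|n] Hn]; simpl in Hn; auto.
  - intros [H1|H1]; [exists O|exists (S O)]; exact H1.
Qed.

Lemma borel_inter A B : borelR A -> borelR B -> borelR (fun x => A x /\ B x).
Proof.
  intros HA HB.
  apply (borel_ext _ _ (borel_compl _ (borel_union _ _ (borel_compl _ HA) (borel_compl _ HB)))).
  intro x; destruct (classic (A x)); destruct (classic (B x)); tauto.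
Qed.

Lemma borel_open a b : borelR (fun x => a < x < b).
Proof. intros S HS HG; apply HG; exists a, b; tauto. Qed.

Lemma borel_inI K : borelR (inI K).
Proof.
  set (G := fun (n : nat) (x : R) => (- INR n - 1 < x < 0) \/ (K < x < K + INR n + 1)).
  assert (H : borelR (fun x => ~ exists n, G n x)).
  { apply borel_compl, borel_sigma. intro n; apply borel_union; apply borel_open. }
  apply (borel_ext _ _ H). intro x; unfold inI, G; split.
  - intros Hn. destruct (Rle_dec 0 x) as [H0|H0]; [destruct (Rle_dec x K) as [H1|H1]|].
    + lra.
    + exfalso; apply Hn. destruct (INR_archimed 1 (x - K)) as [n Hn']; [lra|].
      exists n; right; lra.
    + exfalso; apply Hn. destruct (INR_archimed 1 (- x)) as [n Hn']; [lra|].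
      exists n; left; lra.
  - intros Hx [n [Hn|Hn]]; lra.
Qed.

Section Meas.
Variable K : R.
Variable mu : (R -> Prop) -> R.
Hypothesis Hmu : is_prob_measure K mu.

Lemma mu_ext A B : (forall x, A x <-> B x) -> mu A = mu B.
Proof. intro H; rewrite (pred_ext A B H); reflexivity. Qed.

Lemma mu_empty : mu (fun _ => False) = 0.
Proof.
  destruct Hmu as [H0 [Hadd _]].
  assert (Hs := Hadd (fun _ => fun _ => False) (fun _ => borel_False)
     (fun n m _ x h _ => h)).
  simpl in Hs.
  rewrite (mu_ext (fun x => exists _ : nat, False) (fun _ => False)) in Hs
    by (intro x; split; [intros [_ h]; exact h | tauto]).
  set (c := mu (fun _ => False)) in *.
  destruct (Req_dec c 0) as [E|E]; auto. exfalso.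
  assert (Hc : 0 < Rabs c) by (apply Rabs_pos_lt; auto).
  destruct (Hs (Rabs c / 2)) as [N HN]; [lra|].
  assert (h1 := HN N (Nat.le_refl _)). assert (h2 := HN (S N) (Nat.le_succ_diag_r _)).
  rewrite sum_cte in h1, h2. unfold Rdist in h1, h2. rewrite S_INR in h2.
  set (u := INR (S N)) in *.
  replace (c * (u + 1) - c) with ((c * u - c) + c) in h2 by ring.
  set (w := c * u - c) in *.
  split_Rabs; lra.
Qed.

Lemma mu_add2 A B : borelR A -> borelR B -> (forall x, A x -> B x -> False) ->
  mu (fun x => A x \/ B x) = mu A + mu B.
Proof.
  intros HA HB Hd.
  destruct Hmu as [H0 [Hadd _]].
  set (F := fun n : nat => match n with O => A | S O => B | _ => fun _ => False end).
  assert (HF : forall n, borelR (F n)).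
  { intros [|[|n]]; simpl; auto using borel_False. }
  assert (Hpd : pairwise_disjoint F).
  { intros n m Hnm x h1 h2. destruct n as [|[|n]]; destruct m as [|[|m]]; simpl in *;
      first [ congruence | eauto | contradiction ]. }
  assert (Hs := Hadd F HF Hpd).
  rewrite (mu_ext (fun x => exists n, F n x) (fun x => A x \/ B x)) in Hs.
  2:{ intro x; split.
      - intros [[|[|n]] h]; simpl in h; tauto.
      - intros [h|h]; [exists O|exists (S O)]; exact h. }
  apply (uniqueness_sum (fun n => mu (F n))); auto.
  intros eps Heps. exists (S O). intros n Hn.
  assert (Hsum : forall k, sum_f_R0 (fun n => mu (F n)) (S k) = mu A + mu B).
  { induction k.
    - simpl. reflexivity.
    - rewrite tech5, IHk. simpl. rewrite mu_empty. ring. }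
  destruct n as [|n]; [lia|]. rewrite Hsum. unfold Rdist.
  replace (mu A + mu B - (mu A + mu B)) with 0 by ring. rewrite Rabs_R0; lra.
Qed.

Lemma mu_ge0 A : borelR A -> 0 <= mu A.
Proof. destruct Hmu as [H _]; auto. Qed.

Lemma mu_null E : borelR E -> (forall x, inI K x -> E x -> False) -> mu E = 0.
Proof.
  intros HE Hd.
  destruct Hmu as [_ [_ [HT HI]]].
  assert (HU : borelR (fun x => E x \/ inI K x)) by (apply borel_union; auto using borel_inI).
  assert (h1 : mu (fun x => E x \/ inI K x) = mu E + 1).
  { rewrite mu_add2; [assert (HI' : mu (inI K) = 1) by exact HI; try rewrite HI'; try rewrite HI; ring | auto | apply borel_inI | intros x h h'; eauto]. }
  assert (h2 : mu (fun x => (E x \/ inI K x) \/ ~ (E x \/ inI K x)) = 1).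
  { rewrite <- HT. apply mu_ext. intro x; split; auto. intros _; apply classic. }
  rewrite mu_add2 in h2; auto using borel_compl.
  assert (h3 := mu_ge0 _ (borel_compl _ HU)). assert (h4 := mu_ge0 _ HE). lra.
Qed.

Definition muR (E : R -> Prop) := fun A : R -> Prop => mu (fun x => A x /\ E x).

Lemma split_one B E A : borelR B -> borelR E -> borelR A ->
  muR E B = muR (fun x => E x /\ A x) B + muR (fun x => E x /\ ~ A x) B.
Proof.
  intros HB HE HA. unfold muR.
  rewrite <- mu_add2.
  - apply mu_ext. intro x; destruct (classic (A x)); tauto.
  - repeat apply borel_inter; auto.
  - repeat apply borel_inter; auto using borel_compl.
  - intros x h h'; tauto.
Qed.

Lemma simple_int_cons m a A s : simple_int m ((a, A) :: s) = a * m A + simple_int m s.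
Proof. reflexivity. Qed.
Lemma simple_eval_cons a A s x : simple_eval ((a, A) :: s) x = a * indic A x + simple_eval s x.
Proof. reflexivity. Qed.

Lemma simple_split s E A : Forall (fun p => borelR (snd p)) s -> borelR E -> borelR A ->
  simple_int (muR E) s = simple_int (muR (fun x => E x /\ A x)) s
                        + simple_int (muR (fun x => E x /\ ~ A x)) s.
Proof.
  intros Hs HE HA. induction s as [|[a B] s IH].
  - simpl; ring.
  - inversion Hs; subst. rewrite !simple_int_cons. rewrite IH by auto.
    rewrite (split_one B E A) by auto. ring.
Qed.

Lemma simple_le s : Forall (fun p => borelR (snd p)) s -> forall E t, borelR E ->
  (forall x, inI K x -> E x -> simple_eval s x <= t) ->
  simple_int (muR E) s <= t * mu E.
Proof.
  induction s as [|[a A] s IH]; intros Hs E t HE Hle.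
  - simpl. destruct (Rle_dec 0 t) as [Ht|Ht].
    + assert (h := mu_ge0 _ HE). nra.
    + rewrite (mu_null E HE). lra. intros x h1 h2. specialize (Hle x h1 h2). simpl in Hle. lra.
  - inversion Hs; subst. simpl in H1. rename H1 into HA. rename H2 into Hs'.
    rewrite simple_int_cons. rewrite (simple_split s E A) by auto.
    assert (h1 := IH Hs' (fun x => E x /\ A x) (t - a) (borel_inter _ _ HE HA)).
    assert (h2 := IH Hs' (fun x => E x /\ ~ A x) t (borel_inter _ _ HE (borel_compl _ HA))).
    assert (e1 : mu E = mu (fun x => E x /\ A x) + mu (fun x => E x /\ ~ A x)).
    { rewrite <- mu_add2.
      - apply mu_ext. intro x; destruct (classic (A x)); tauto.
      - apply borel_inter; auto.
      - apply borel_inter; auto using borel_compl.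
      - intros x h h'; tauto. }
    assert (e2 : muR E A = mu (fun x => E x /\ A x)).
    { unfold muR; apply mu_ext; tauto. }
    rewrite e1, e2.
    assert (h1' : simple_int (muR (fun x => E x /\ A x)) s <= (t - a) * mu (fun x => E x /\ A x)).
    { apply h1. intros x hx [he ha]. specialize (Hle x hx he).
      rewrite simple_eval_cons in Hle. unfold indic in Hle.
      destruct (excluded_middle_informative (A x)); [lra|contradiction]. }
    assert (h2' : simple_int (muR (fun x => E x /\ ~ A x)) s <= t * mu (fun x => E x /\ ~ A x)).
    { apply h2. intros x hx [he ha]. specialize (Hle x hx he).
      rewrite simple_eval_cons in Hle. unfold indic in Hle.
      destruct (excluded_middle_informative (A x)); [contradiction|lra]. }
    nra.
Qed.

Lemma integral_le f I B : is_integral K mu f I -> (forall x, inI K x -> f x <= B) -> I <= B.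
Proof.
  intros [_ Hlub] Hf. apply Hlub. intros r [s [Hs [Hev Hr]]]. subst r.
  assert (e : muR (fun _ => True) = mu).
  { extensionality A. unfold muR. apply mu_ext. tauto. }
  assert (h := simple_le s Hs (fun _ => True) B borel_True).
  rewrite e in h. destruct Hmu as [_ [_ [HT _]]]. rewrite HT in h.
  assert (h' : simple_int mu s <= B * 1). { apply h. intros x hx _. specialize (Hev x hx); specialize (Hf x hx); lra. }
  lra.
Qed.

Lemma integral_ge f I m : is_integral K mu f I -> (forall x, inI K x -> m <= f x) -> m <= I.
Proof.
  intros [Hub _] Hf. apply Hub. exists ((m, fun _ => True) :: nil). split; [|split].
  - constructor; [exact borel_True| constructor].
  - intros x hx. rewrite simple_eval_cons. unfold indic.
    destruct (excluded_middle_informative True); [|tauto]. simpl. specialize (Hf x hx); lra.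
  - rewrite simple_int_cons. destruct Hmu as [_ [_ [HT _]]]. rewrite HT. simpl. ring.
Qed.

End Meas.

Theorem mainTheorem14 (K : R) (b c : R -> R) (lam gamma : R) :
  donation_game K b c ->
  0 < lam < 1 ->
  (exists (psi : R -> R) (sigma0 : (R -> Prop) -> R)
          (sigma : R -> R -> (R -> Prop) -> R) (I0 : R),
      bounded_on K psi /\ measurable_on K psi /\
      is_prob_measure K sigma0 /\ is_markov_kernel K sigma /\
      is_integral K sigma0 psi I0 /\
      (forall x y, inI K x -> inI K y ->
         exists I, is_integral K (sigma x y) psi I /\
           uY b c x y - gamma = psi x - lam * I - (1 - lam) * I0)) ->
  0 <= gamma <= b K - c K.
Proof.
  intros [HK [_ [_ [Hb [Hc [Hb0 [Hc0 _]]]]]]] Hlam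
    [psi [s0 [sg [I0 [[Mb HMb] [_ [Hs0 [[Hsg _] [HI0 Heq]]]]]]]]].
  assert (HK0 : inI K 0) by (unfold inI; lra).
  assert (HKK : inI K K) by (unfold inI; lra).
  destruct (completeness (fun v => exists x, inI K x /\ v = psi x)) as [M [HM1 HM2]].
  { exists Mb. intros v [x [hx ->]]. specialize (HMb x hx). unfold Rabs in HMb; destruct (Rcase_abs (psi x)); lra. }
  { exists (psi 0); exists 0; auto. }
  destruct (completeness (fun v => exists x, inI K x /\ v = - psi x)) as [L [HL1 HL2]].
  { exists Mb. intros v [x [hx ->]]. specialize (HMb x hx). unfold Rabs in HMb; destruct (Rcase_abs (psi x)); lra. }
  { exists (- psi 0); exists 0; auto. }
  assert (Hup : forall x, inI K x -> psi x <= M) by (intros x hx; apply HM1; eauto).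
  assert (Hlo : forall x, inI K x -> - L <= psi x).
  { intros x hx. assert (- psi x <= L) by (apply HL1; eauto). lra. }
  assert (I0M : I0 <= M) by (apply (integral_le K s0 Hs0 psi); auto).
  assert (I0L : - L <= I0) by (apply (integral_ge K s0 Hs0 psi); auto).
  split.
  - assert (HL : L <= - (- gamma + lam * (- L) + (1 - lam) * I0)).
    { apply HL2. intros v [x [hx ->]].
      destruct (Heq x 0 hx HK0) as [I [HI He]]. unfold uY in He.
      assert (h := integral_ge K (sg x 0) (Hsg x 0 hx HK0) psi I (- L) HI Hlo).
      assert (hb : b 0 <= b x) by (unfold inI in hx; apply Hb; lra).
      nra. }
    nra.
  - assert (HM : M <= b K - c K - gamma + lam * M + (1 - lam) * I0).
    { apply HM2. intros v [x [hx ->]].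
      destruct (Heq x K hx HKK) as [I [HI He]]. unfold uY in He.
      assert (h := integral_le K (sg x K) (Hsg x K hx HKK) psi I M HI Hup).
      assert (hb : b x <= b K) by (unfold inI in hx; apply Hb; lra).
      nra. }
    nra.
Qed.
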